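(* Let $\mathcal{X}$ be a finite set and $\pi$ a probability mass function on $\mathcal{X}$ with full support. Let groups $\mathcal{G}_1,\mathcal{G}_2$ act on $\mathcal{X}$ with orbits $(\mathcal{O}_i)_{i=1}^{k_1}$ and $(\mathcal{C}_j)_{j=1}^{k_2}$, Gibbs orbit kernels $G_1,G_2$, and let $S_1,S_2\subseteq\ell^2(\pi)$ be the subspaces onto which $G_1,G_2$ project. Let $T$ be the $k_2\times k_1$ matrix $T(j,i)=\pi(\mathcal{O}_i\cap\mathcal{C}_j)/\sqrt{\pi(\mathcal{O}_i)\pi(\mathcal{C}_j)}$. Then the cosine $c(S_1,S_2)=\sigma_2(T)$, the largest singular value of $T$ less than $1$. If all singular values of $T$ are $1$, then $c(S_1,S_2)=0$ and $G_1G_2=G_2G_1=G_\infty$.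
   Context: $\ell^2(\pi)$ has inner product $\langle f,g\rangle_\pi=\sum_xf(x)g(x)\pi(x)$; $\pi(A)=\sum_{z\in A}\pi(z)$. The Gibbs kernel of a group action with orbit $\mathcal{O}(x)$ of $x$ is $G(x,y)=\pi(y)/\pi(\mathcal{O}(x))$ for $y\in\mathcal{O}(x)$ and $0$ otherwise; it is the $\ell^2(\pi)$-orthogonal projection onto the functions constant on each orbit. $G_\infty$ denotes the orthogonal projection onto $S_1\cap S_2$. The cosine is $c(S_1,S_2)=\sup\{\langle f,h\rangle_\pi: f\in S_1\cap(S_1\cap S_2)^\perp,\ h\in S_2\cap(S_1\cap S_2)^\perp,\ \|f\|_\pi,\|h\|_\pi\le1\}$, which equals the operator norm $\|G_1G_2-G_\infty\|_{\ell^2(\pi)\to\ell^2(\pi)}$. Singular values of $T$ are listed in non-increasing order $\sigma_1(T)\ge\sigma_2(T)\ge\cdots$. *)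

(* Defs.v *)
From HB Require Import structures.
From mathcomp Require Import all_boot all_order all_algebra all_fingroup.
From mathcomp Require Import boolp classical_sets reals.
Set Implicit Arguments.
Unset Strict Implicit.
Unset Printing Implicit Defensive.
Import Order.TTheory GRing.Theory Num.Theory.
Local Open Scope ring_scope.
Local Open Scope classical_set_scope.

Definition piA (R : realType) (X : finType) (pi : X -> R) (A : {set X}) : R :=
  \sum_(z in A) pi z.

Definition inner (R : realType) (X : finType) (pi : X -> R) (f g : X -> R) : R :=
  \sum_x f x * g x * pi x.

Definition normpi (R : realType) (X : finType) (pi : X -> R) (f : X -> R) : R :=
  Num.sqrt (inner pi f f).

Definition orb (gT : finGroupType) (X : finType) (to : {action gT &-> X}) (x : X)
  : {set X} := orbit to [set: gT]%SET x.

Definition orbits (gT : finGroupType) (X : finType) (to : {action gT &-> X})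
  : {set {set X}} := orb to @: [set: X]%SET.

Definition gibbs (R : realType) (X : finType) (pi : X -> R)
  (gT : finGroupType) (to : {action gT &-> X}) (x y : X) : R :=
  if y \in orb to x then pi y / piA pi (orb to x) else 0.

Definition kop (R : realType) (X : finType) (K : X -> X -> R) (f : X -> R) : X -> R :=
  fun x => \sum_y K x y * f y.

Definition range_sp (R : realType) (X : finType) (K : X -> X -> R) : set (X -> R) :=
  [set f | exists g, f = kop K g].

Definition orth (R : realType) (X : finType) (pi : X -> R) (S : set (X -> R))
  : set (X -> R) := [set f | forall g, S g -> inner pi f g = 0].

Definition is_orth_proj (R : realType) (X : finType) (pi : X -> R)
  (S : set (X -> R)) (P : (X -> R) -> (X -> R)) : Prop :=
  forall f, S (P f) /\ orth pi S (fun x => f x - P f x).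

Definition cosine (R : realType) (X : finType) (pi : X -> R) (S1 S2 : set (X -> R)) : R :=
  sup [set r | exists f h,
        (S1 `&` orth pi (S1 `&` S2)) f /\ (S2 `&` orth pi (S1 `&` S2)) h /\
        normpi pi f <= 1 /\ normpi pi h <= 1 /\ r = inner pi f h].

Definition Tmat (R : realType) (X : finType) (pi : X -> R)
  (gT1 gT2 : finGroupType) (to1 : {action gT1 &-> X}) (to2 : {action gT2 &-> X})
  : 'M[R]_(#|orbits to2|, #|orbits to1|) :=
  \matrix_(j, i)
    (let O := @enum_val _ (mem (orbits to1)) i in
     let C := @enum_val _ (mem (orbits to2)) j in
     piA pi (O :&: C) / Num.sqrt (piA pi O * piA pi C)).

(* s is a singular value of T (the min(m,n) singular values convention):
   s >= 0 and s^2 is an eigenvalue of both T T^T and T^T T. *)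
Definition singval (R : realType) (m n : nat) (T : 'M[R]_(m, n)) (s : R) : Prop :=
  0 <= s /\ eigenvalue (T *m T^T) (s ^+ 2) /\ eigenvalue (T^T *m T) (s ^+ 2).

(* Main.v *)
Require Import Defs.
From HB Require Import structures.
From mathcomp Require Import all_boot all_order all_algebra all_fingroup.
From mathcomp Require Import boolp classical_sets reals.
From mathcomp Require Import complex.
From mathcomp Require Import ring lra.
Import Order.TTheory GRing.Theory Num.Theory.
Set Implicit Arguments.
Unset Strict Implicit.
Unset Printing Implicit Defensive.
Local Open Scope ring_scope.

Section LA.
Variable R : realType.

Definition dot n (u v : 'rV[R]_n) : R := \sum_i u 0 i * v 0 i.

Lemma dotC n (u v : 'rV[R]_n) : dot u v = dot v u.
Proof. by apply: eq_bigr => i _; rewrite mulrC. Qed.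

Lemma dotDl n (u v w : 'rV[R]_n) : dot (u + v) w = dot u w + dot v w.
Proof. by rewrite /dot -big_split; apply: eq_bigr => i _; rewrite mxE mulrDl. Qed.

Lemma dotZl n a (u w : 'rV[R]_n) : dot (a *: u) w = a * dot u w.
Proof. by rewrite /dot mulr_sumr; apply: eq_bigr => i _; rewrite mxE mulrA. Qed.

Lemma dotNl n (u w : 'rV[R]_n) : dot (- u) w = - dot u w.
Proof. by rewrite -scaleN1r dotZl mulN1r. Qed.

Lemma dotBl n (u v w : 'rV[R]_n) : dot (u - v) w = dot u w - dot v w.
Proof. by rewrite dotDl dotNl. Qed.

Lemma dot0l n (w : 'rV[R]_n) : dot 0 w = 0.
Proof. by rewrite /dot big1 // => i _; rewrite mxE mul0r. Qed.

Lemma dotDr n (u v w : 'rV[R]_n) : dot w (u + v) = dot w u + dot w v.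
Proof. by rewrite dotC dotDl !(dotC w). Qed.
Lemma dotZr n a (u w : 'rV[R]_n) : dot w (a *: u) = a * dot w u.
Proof. by rewrite dotC dotZl dotC. Qed.
Lemma dotBr n (u v w : 'rV[R]_n) : dot w (u - v) = dot w u - dot w v.
Proof. by rewrite dotC dotBl !(dotC w). Qed.
Lemma dot0r n (w : 'rV[R]_n) : dot w 0 = 0.
Proof. by rewrite dotC dot0l. Qed.

Lemma dot_mulmx n m (u : 'rV[R]_n) (A : 'M[R]_(n, m)) v :
  dot (u *m A) v = dot u (v *m A^T).
Proof.
rewrite /dot.
transitivity (\sum_j \sum_k u 0 k * A k j * v 0 j).
  by apply: eq_bigr => j _; rewrite mxE mulr_suml.
rewrite exchange_big /=; apply: eq_bigr => k _.
rewrite mxE mulr_sumr; apply: eq_bigr => j _; rewrite !mxE.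
by rewrite [v 0 j * _]mulrC mulrA.
Qed.

Lemma dot_ge0 n (u : 'rV[R]_n) : 0 <= dot u u.
Proof. by apply: sumr_ge0 => i _; rewrite -expr2 sqr_ge0. Qed.

Lemma dot_eq0 n (u : 'rV[R]_n) : dot u u = 0 -> u = 0.
Proof.
move=> /eqP; rewrite psumr_eq0 => [/allP H|i _]; last by rewrite -expr2 sqr_ge0.
apply/rowP => i; rewrite mxE; apply/eqP.
by have := H i (mem_index_enum _); rewrite mulf_eq0 orbb.
Qed.

Lemma dot_gt0 n (u : 'rV[R]_n) : u != 0 -> 0 < dot u u.
Proof.
move=> nz; rewrite lt_neqAle dot_ge0 andbT; apply/eqP => /esym/dot_eq0.
by apply/eqP.
Qed.

Lemma mulmx_tr_dot n (u v : 'rV[R]_n) : (u *m v^T) 0 0 = dot u v.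
Proof. by rewrite mxE; apply: eq_bigr => i _; rewrite mxE. Qed.


Local Notation CRe := (@complex.Re R).
Local Notation CIm := (@complex.Im R).
Lemma ReMr (x : R[i]) (c : R) : CRe (x * real_complex R c) = CRe x * c.
Proof. by case: x => a b; simpc. Qed.
Lemma ImMr (x : R[i]) (c : R) : CIm (x * real_complex R c) = CIm x * c.
Proof. by case: x => a b; simpc. Qed.
Lemma ReMl (z x : R[i]) : CRe (z * x) = CRe z * CRe x - CIm z * CIm x.
Proof. by case: x => a b; case: z => c d; simpc. Qed.
Lemma ImMl (z x : R[i]) : CIm (z * x) = CRe z * CIm x + CIm z * CRe x.
Proof. by case: x => a b; case: z => c d; simpc. Qed.
Lemma ReD (x y : R[i]) : CRe (x + y) = CRe x + CRe y.
Proof. by case: x; case: y. Qed.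
Lemma ImD (x y : R[i]) : CIm (x + y) = CIm x + CIm y.
Proof. by case: x; case: y. Qed.
Lemma Re0 : CRe 0 = 0. Proof. by []. Qed.
Lemma Im0 : CIm 0 = 0. Proof. by []. Qed.
Lemma ReSum I r (P : pred I) (F : I -> R[i]) : CRe (\sum_(i <- r | P i) F i) = \sum_(i <- r | P i) CRe (F i).
Proof. exact: (big_morph _ ReD Re0). Qed.
Lemma ImSum I r (P : pred I) (F : I -> R[i]) : CIm (\sum_(i <- r | P i) F i) = \sum_(i <- r | P i) CIm (F i).
Proof. exact: (big_morph _ ImD Im0). Qed.

Lemma K2 n (B : 'M[R]_n) : B^T = B -> forall m (W : 'M[R]_(m, n)),
  (W *m B <= W)%MS -> W != 0 ->
  exists v : 'rV_n, exists lam : R, [/\ (v <= W)%MS, v != 0 & v *m B = lam *: v].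
Proof.
move=> Bsym m W sWB W0.
set V := row_base W.
have sVW : (V <= W)%MS by rewrite eq_row_base.
have sWV : (W <= V)%MS by rewrite eq_row_base.
have r0 : (0 < \rank W)%N by rewrite lt0n mxrank_eq0.
have VB : (V *m B <= V)%MS.
  exact: submx_trans (submxMr _ sVW) (submx_trans sWB sWV).
set M := V *m B *m pinvmx V.
have MV : M *m V = V *m B by rewrite mulmxKpV.
set Mc := map_mx (real_complex R) M.
have [z] := eigenvalue_closed Mc r0.
move=> /eigenvalueP [y yM y0].
set yr := map_mx CRe y; set yi := map_mx CIm y.
set x := CRe z; set w := CIm z.
have Er : yr *m M = x *: yr - w *: yi.
  apply/rowP => j; have := congr1 (fun A : 'rV[R[i]]_(\rank W) => CRe (A 0 j)) yM => /=.
  rewrite !mxE ReSum ReMl => <-; apply: eq_bigr => k _.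
  by rewrite !mxE ReMr.
have Ei : yi *m M = x *: yi + w *: yr.
  apply/rowP => j; have := congr1 (fun A : 'rV[R[i]]_(\rank W) => CIm (A 0 j)) yM => /=.
  rewrite !mxE ImSum ImMl => <-; apply: eq_bigr => k _.
  by rewrite !mxE ImMr.
set a := yr *m V; set b := yi *m V.
have Ea : a *m B = x *: a - w *: b.
  by rewrite /a -mulmxA -MV mulmxA Er mulmxBl !scalemxAl.
have Eb : b *m B = x *: b + w *: a.
  by rewrite /b -mulmxA -MV mulmxA Ei mulmxDl !scalemxAl.
have key : dot (a *m B) b = dot a (b *m B) by rewrite dot_mulmx Bsym.
rewrite Ea Eb dotBl !dotZl dotDr !dotZr in key.
have ab0 : (a != 0) || (b != 0).
  apply: contraR y0; rewrite negb_or !negbK /a /b !mulmx_free_eq0 ?row_base_free //.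
  move=> /andP[/eqP r0' /eqP i0']; apply/eqP/rowP => j; rewrite mxE.
  have := congr1 (fun A : 'rV[R]_(\rank W) => A 0 j) r0'; have := congr1 (fun A : 'rV[R]_(\rank W) => A 0 j) i0'.
  rewrite !mxE; case: (y 0 j) => p q /= -> ->; by [].
have pos : 0 < dot a a + dot b b.
  case/orP: ab0 => nz.
    by apply: lt_le_trans (dot_gt0 nz) _; rewrite lerDl dot_ge0.
  by apply: lt_le_trans (dot_gt0 nz) _; rewrite lerDr dot_ge0.
have w0 : w = 0.
  have : w * (dot a a + dot b b) = 0.
    by rewrite mulrDr; lra.
  by move/eqP; rewrite mulf_eq0 (gt_eqF pos) orbF => /eqP.
rewrite w0 scale0r subr0 in Ea; rewrite w0 scale0r addr0 in Eb.
case/orP: ab0 => nz.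
  by exists a, x; split => //; apply: submx_trans (submxMl _ _) sVW.
by exists b, x; split => //; apply: submx_trans (submxMl _ _) sVW.
Qed.

Lemma ray n (B : 'M[R]_n) : B^T = B -> forall (mu : R) m (W : 'M[R]_(m, n)),
  (W *m B <= W)%MS ->
  (forall (v : 'rV_n) lam, (v <= W)%MS -> v != 0 -> v *m B = lam *: v -> lam <= mu) ->
  forall x : 'rV_n, (x <= W)%MS -> dot (x *m B) x <= mu * dot x x.
Proof.
move=> Bsym mu m W; have [k] := ubnP (\rank W).
elim: k m W => // k IH m W rk sWB Hev x xW.
have [W0|W0] := eqVneq W 0.
  by move: xW; rewrite W0 => /submx0null ->; rewrite mul0mx !dot0l mulr0.
have [v [lam [vW v0 vB]]] := K2 Bsym sWB W0.
set W' := (W :&: kermx v^T)%MS.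
have sW'W : (W' <= W)%MS by rewrite capmxSl.
have W'v : W' *m v^T = 0 by apply/eqP; rewrite -sub_kermx capmxSr.
have vv : 0 < dot v v by exact: dot_gt0.
have rk' : (\rank W' < k)%N.
  suff h : (\rank W' < \rank W)%N by apply: leq_trans h _; rewrite -ltnS.
  apply: rank_ltmx; rewrite ltmxE sW'W /=; apply/negP => sWW'.
  have : (v <= kermx v^T)%MS.
    exact: submx_trans vW (submx_trans sWW' (capmxSr _ _)).
  rewrite sub_kermx => /eqP H.
  have := congr1 (fun A : 'M[R]_1 => A 0 0) H; rewrite mulmx_tr_dot mxE => H'.
  by move: vv; rewrite H' ltxx.
have sW'B : (W' *m B <= W')%MS.
  rewrite sub_capmx; apply/andP; split.
    exact: submx_trans (submxMr _ sW'W) sWB.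
  rewrite sub_kermx -mulmxA -{1}Bsym -trmx_mul vB linearZ /= -scalemxAr W'v.
  by rewrite scaler0.
have Hev' : forall (v' : 'rV_n) lam', (v' <= W')%MS -> v' != 0 ->
    v' *m B = lam' *: v' -> lam' <= mu.
  by move=> v' lam' h; apply: Hev; apply: submx_trans h sW'W.
have [al [x' [xE x'W' hx'v]]] : exists al x', [/\ x = x' + al *: v,
    (x' <= W')%MS & dot x' v = 0].
  exists (dot x v / dot v v), (x - (dot x v / dot v v) *: v); split.
  - by rewrite subrK.
  - rewrite sub_capmx; apply/andP; split.
      by rewrite -scaleNr addmx_sub // scalemx_sub.
    rewrite sub_kermx; apply/eqP/matrixP => i j; rewrite !ord1 mulmx_tr_dot mxE.
    rewrite dotBl dotZl mulfVK //; first by rewrite subrr.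
    by rewrite gt_eqF.
  - rewrite dotBl dotZl mulfVK ?subrr //.
    by rewrite gt_eqF.
have hvx' : dot v x' = 0 by rewrite dotC.
have hx'Bv : dot (x' *m B) v = 0 by rewrite dot_mulmx Bsym vB dotZr hx'v mulr0.
have IHx := IH _ _ rk' sW'B Hev' x' x'W'.
have lmu : lam <= mu by exact: Hev vW v0 vB.
subst x.
rewrite mulmxDl -scalemxAl vB !dotDl !dotDr !dotZl !dotZr hx'Bv hvx' hx'v.
rewrite ?hvx' !mulr0 !addr0 ?add0r.
have : 0 <= al * (al * dot v v) by rewrite mulrA -expr2 mulr_ge0 ?sqr_ge0 ?dot_ge0.
nra.
Qed.

End LA.

Section Inner.
Variables (R : realType) (X : finType) (pi : X -> R).
Hypothesis pipos : forall x, 0 < pi x.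
Local Notation ip := (inner pi).

Lemma ipC f g : ip f g = ip g f.
Proof. by apply: eq_bigr => x _; rewrite [f x * _]mulrC. Qed.

Lemma ip_sumL I (r : seq I) (P : pred I) (F : I -> X -> R) g :
  ip (fun x => \sum_(i <- r | P i) F i x) g = \sum_(i <- r | P i) ip (F i) g.
Proof.
rewrite /inner.
transitivity (\sum_x \sum_(i <- r | P i) F i x * g x * pi x).
  by apply: eq_bigr => x _; rewrite !mulr_suml.
by rewrite exchange_big.
Qed.

Lemma ip_scaleL a f g : ip (fun x => a * f x) g = a * ip f g.
Proof. by rewrite /inner mulr_sumr; apply: eq_bigr => x _; rewrite !mulrA. Qed.

Lemma ipBL f f' g : ip (fun x => f x - f' x) g = ip f g - ip f' g.
Proof.
rewrite /inner -sumrB; apply: eq_bigr => x _; by rewrite !mulrBl.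
Qed.

Lemma ipBR f f' g : ip g (fun x => f x - f' x) = ip g f - ip g f'.
Proof. by rewrite ipC ipBL !(ipC g). Qed.

Lemma ip0L g : ip (fun _ => 0) g = 0.
Proof. by rewrite /inner big1 // => x _; rewrite !mul0r. Qed.

Lemma ip_ge0 f : 0 <= ip f f.
Proof.
by apply: sumr_ge0 => x _; apply: mulr_ge0; [rewrite -expr2 sqr_ge0 | exact: ltW].
Qed.

Lemma ip_eq0 f : ip f f = 0 -> f = (fun _ => 0).
Proof.
move=> /eqP; rewrite psumr_eq0 => [/allP H|x _]; last first.
  by apply: mulr_ge0; [rewrite -expr2 sqr_ge0 | exact: ltW].
apply: funext => x; have := H x (mem_index_enum _).
by rewrite !mulf_eq0 orbb (gt_eqF (pipos x)) orbF => /eqP.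
Qed.

Lemma ip_lin2 a b f g :
  ip (fun x => a * f x + b * g x) (fun x => a * f x + b * g x) =
  a ^+ 2 * ip f f + 2 * a * b * ip f g + b ^+ 2 * ip g g.
Proof.
rewrite /inner !mulr_sumr -!big_split /=; apply: eq_bigr => x _.
by rewrite -!mulrA; ring.
Qed.

Lemma CS f g : ip f g ^+ 2 <= ip f f * ip g g.
Proof.
have := ip_ge0 g; rewrite le_eqVlt => /orP[/eqP g0|gpos].
  have -> : g = (fun _ => 0) by apply: ip_eq0.
  by rewrite ipC ip0L ip0L expr0n /= mulr0.
have := ip_ge0 (fun x => ip g g * f x + (- ip f g) * g x).
rewrite ip_lin2 => H.
have H2 : 0 <= ip g g * (ip f f * ip g g - ip f g ^+ 2) by nra.
rewrite -subr_ge0; move: H2; rewrite pmulr_rge0 //.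
Qed.

Lemma ip_ext f1 f2 : (forall g, ip f1 g = ip f2 g) -> f1 = f2.
Proof.
move=> H; have : ip (fun x => f1 x - f2 x) (fun x => f1 x - f2 x) = 0.
  by rewrite ipBL !H subrr.
move/ip_eq0 => E; apply: funext => x.
by have := congr1 (fun h => h x) E => /= /eqP; rewrite subr_eq0 => /eqP.
Qed.

Section Family.
Variables (k : nat) (e : 'I_k -> X -> R).
Hypothesis ortho : forall i j, ip (e i) (e j) = (i == j)%:R.

Definition comb (a : 'rV[R]_k) : X -> R := fun x => \sum_i a 0 i * e i x.
Definition coef (f : X -> R) : 'rV[R]_k := \row_i ip f (e i).
Definition Pr f := comb (coef f).

Lemma ip_combL a g : ip (comb a) g = \sum_i a 0 i * ip (e i) g.
Proof. rewrite /comb ip_sumL; apply: eq_bigr => i _; exact: ip_scaleL. Qed.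

Lemma coef_comb a : coef (comb a) = a.
Proof.
apply/rowP => j; rewrite mxE ip_combL (bigD1 j) //= ortho eqxx mulr1 big1 ?addr0 //.
by move=> i /negbTE ij; rewrite ortho ij mulr0.
Qed.

Lemma ip_comb a b : ip (comb a) (comb b) = dot a b.
Proof.
rewrite ip_combL; apply: eq_bigr => i _.
rewrite ipC; have := congr1 (fun v : 'rV[R]_k => v 0 i) (coef_comb b).
by rewrite mxE => ->.
Qed.

Lemma ipPL f g : ip (Pr f) g = dot (coef f) (coef g).
Proof. by rewrite /Pr ip_combL; apply: eq_bigr => i _; rewrite !mxE [ip (e i) g]ipC. Qed.

Lemma ipPR f g : ip f (Pr g) = dot (coef f) (coef g).
Proof. by rewrite ipC ipPL dotC. Qed.

Lemma ipP_adj f g : ip (Pr f) g = ip f (Pr g).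
Proof. by rewrite ipPL ipPR. Qed.

Lemma Pr_comb a : Pr (comb a) = comb a.
Proof. by rewrite /Pr coef_comb. Qed.

Lemma coefP f : coef (Pr f) = coef f.
Proof. by rewrite /Pr coef_comb. Qed.

Lemma ip_res f : ip (fun x => f x - Pr f x) (fun x => f x - Pr f x) =
  ip f f - ip (Pr f) (Pr f).
Proof.
rewrite ipBL !ipBR ipPL ipPR ipPL coefP; lra.
Qed.

Lemma bessel f : ip (Pr f) (Pr f) <= ip f f.
Proof. by rewrite -subr_ge0 -ip_res ip_ge0. Qed.

Lemma fixP f : ip (Pr f) (Pr f) = ip f f -> Pr f = f.
Proof.
move=> H; have := ip_res f; rewrite H subrr => /ip_eq0 E.
apply: funext => x; have := congr1 (fun h => h x) E => /= /eqP.
by rewrite subr_eq0 => /eqP.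
Qed.

Lemma inS f : (exists g, f = Pr g) -> Pr f = f.
Proof. by case=> g ->; rewrite /Pr coef_comb. Qed.

Lemma ip_combZ c a g : ip (comb (c *: a)) g = c * ip (comb a) g.
Proof.
rewrite !ip_combL mulr_sumr; apply: eq_bigr => i _; by rewrite mxE mulrA.
Qed.

End Family.

Section Two.
Variables (k1 k2 : nat) (e : 'I_k1 -> X -> R) (u : 'I_k2 -> X -> R).
Definition TT : 'M[R]_(k2, k1) := \matrix_(j, i) ip (e i) (u j).

Lemma coef_cross a : coef u (comb e a) = a *m TT^T.
Proof.
apply/rowP => j; rewrite !mxE ip_combL; apply: eq_bigr => i _.
by rewrite !mxE.
Qed.

Lemma coef_cross' b : coef e (comb u b) = b *m TT.
Proof.
apply/rowP => i; rewrite !mxE ip_combL; apply: eq_bigr => j _.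
by rewrite !mxE ipC.
Qed.
End Two.

End Inner.

Local Open Scope classical_set_scope.

Lemma sup_eq (R : realType) (E : set R) s : E s -> (forall r, E r -> r <= s) -> sup E = s.
Proof.
move=> Es ub; apply/le_anti/andP; split.
  by apply: ge_sup; [exists s | move=> r /ub].
apply: sup_upper_bound => //; split; [by exists s | by exists s => r /ub].
Qed.

Lemma sqrt_le1 (R : realType) (x : R) : 0 <= x -> Num.sqrt x <= 1 -> x <= 1.
Proof.
move=> x0 h; rewrite -(sqr_sqrtr x0); have := sqrtr_ge0 x; nra.
Qed.

Section Abstract.
Variables (R : realType) (X : finType) (pi : X -> R).
Hypothesis pipos : forall x, 0 < pi x.
Variables (k1 k2 : nat) (e : 'I_k1 -> X -> R) (u : 'I_k2 -> X -> R).
Hypothesis oe : forall i j, inner pi (e i) (e j) = (i == j)%:R.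
Hypothesis ou : forall i j, inner pi (u i) (u j) = (i == j)%:R.
Local Notation ip := (inner pi).
Local Notation T := (TT pi e u).
Local Notation B1 := (T^T *m T).
Local Notation S1 := [set f | exists g, f = Pr pi e g].
Local Notation S2 := [set f | exists g, f = Pr pi u g].

Lemma Q (a : 'rV_k1) : dot (a *m B1) a = dot (a *m T^T) (a *m T^T).
Proof. by rewrite mulmxA dot_mulmx. Qed.

Lemma B1sym : B1^T = B1.
Proof. by rewrite trmx_mul trmxK. Qed.

Lemma ipP2 (a : 'rV_k1) : ip (Pr pi u (comb e a)) (Pr pi u (comb e a)) = dot (a *m B1) a.
Proof. by rewrite ipPL (coefP ou) coef_cross Q. Qed.

Lemma eig_range (v : 'rV_k1) (lam : R) : v != 0 -> v *m B1 = lam *: v -> 0 <= lam /\ lam <= 1.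
Proof.
move=> v0 vB; have dv := dot_gt0 v0.
have q : dot (v *m T^T) (v *m T^T) = lam * dot v v by rewrite -Q vB dotZl.
have q0 : 0 <= dot (v *m T^T) (v *m T^T) by exact: dot_ge0.
have q1 : dot (v *m T^T) (v *m T^T) <= dot v v.
  have := bessel pipos ou (comb e v).
  by rewrite ipPL (coefP ou) coef_cross (ip_comb oe).
by split; nra.
Qed.

Lemma eig_singval (v : 'rV_k1) (lam : R) : v != 0 -> v *m B1 = lam *: v -> 0 < lam ->
  singval T (Num.sqrt lam).
Proof.
move=> v0 vB lpos; split; first exact: sqrtr_ge0.
rewrite sqr_sqrtr ?ltW //; split; last by apply/eigenvalueP; exists v.
apply/eigenvalueP; exists (v *m T^T).
  by rewrite mulmxA -(mulmxA v) vB scalemxAl.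
apply: contraNneq v0 => vT0.
have : v *m B1 = 0 by rewrite mulmxA vT0 mul0mx.
by rewrite vB => /eqP; rewrite scaler_eq0 (gt_eqF lpos).
Qed.

Lemma fS1 f : S1 f -> f = comb e (coef pi e f).
Proof. by case=> g ->; rewrite (coefP oe). Qed.

Lemma upper s : singval T s -> s < 1 ->
  (forall s', singval T s' -> s' < 1 -> s' <= s) ->
  forall f h, (S1 `&` orth pi (S1 `&` S2)) f -> (S2 `&` orth pi (S1 `&` S2)) h ->
  normpi pi f <= 1 -> normpi pi h <= 1 -> ip f h <= s.
Proof.
move=> [s0 _] s1 smax f h [f1 fo] [h2 ho] nf nh.
set a := coef pi e f.
have fc : f = comb e a by exact: fS1.
set E := eigenspace B1 1.
set W := kermx E^T.
have EB : E *m B1 = E.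
  have /eigenspaceP : (E <= eigenspace B1 1)%MS by [].
  by rewrite scale1r.
have aW : (a <= W)%MS.
  rewrite sub_kermx; apply/eqP/rowP => kk; rewrite [RHS]mxE.
  set v := row kk E.
  have vE : v *m B1 = v by rewrite /v -row_mul EB.
  have gS1 : S1 (comb e v) by exists (comb e v); rewrite (Pr_comb oe).
  have gS2 : S2 (comb e v).
    exists (comb e v); apply/esym/(fixP pipos ou).
    by rewrite ipP2 vE (ip_comb oe).
  have := fo _ (conj gS1 gS2); rewrite fc (ip_comb oe) /dot => <-.
  by rewrite mxE; apply: eq_bigr => i _; rewrite !mxE.
have WB : (W *m B1 <= W)%MS.
  rewrite sub_kermx -mulmxA -{1}B1sym -trmx_mul EB mulmx_ker.
  by [].
have Hev : forall (v : 'rV_k1) (lam : R), (v <= W)%MS -> v != 0 -> v *m B1 = lam *: v -> lam <= s ^+ 2.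
  move=> v lam vW v0 vB.
  have [l0 l1] := eig_range v0 vB.
  have l1' : lam != 1.
    apply/eqP => l1E; move: vB; rewrite l1E scale1r => vB.
    have vE : (v <= E)%MS by apply/eigenspaceP; rewrite scale1r.
    have vE0 : v *m E^T = 0 by apply/eqP; rewrite -sub_kermx.
    case/submxP: vE => D vD.
    have : v *m v^T = 0 by rewrite {2}vD trmx_mul mulmxA vE0 mul0mx.
    move=> /(congr1 (fun A : 'M[R]_1 => A 0 0)); rewrite mulmx_tr_dot mxE.
    by move/dot_eq0/eqP; rewrite (negbTE v0).
  have [lz|lpos] : lam = 0 \/ 0 < lam.
    by move: l0; rewrite le_eqVlt => /orP[/eqP<-|->]; [left|right].
    by rewrite lz sqr_ge0.
  have sv := eig_singval v0 vB lpos.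
  have t0 := sqrtr_ge0 lam; have t2 := sqr_sqrtr (ltW lpos).
  have lt1 : lam < 1 by rewrite lt_neqAle l1' l1.
  have slt : Num.sqrt lam < 1 by nra.
  have := smax _ sv slt; nra.
have R1 := ray B1sym WB Hev aW.
have hP : Pr pi u h = h by apply: (inS ou).
have r1 : ip f h = ip (Pr pi u f) h by rewrite -{1}hP -ipP_adj.
have cs := CS pipos (Pr pi u f) h.
have pf : ip (Pr pi u f) (Pr pi u f) = dot (a *m B1) a by rewrite fc ipP2.
have ff : ip f f = dot a a by rewrite fc (ip_comb oe).
have nf' : ip f f <= 1 by apply: sqrt_le1 => //; apply: ip_ge0.
have nh' : ip h h <= 1 by apply: sqrt_le1 => //; apply: ip_ge0.
have h0 := ip_ge0 pipos h.
have a0 := dot_ge0 a.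
have pf0 : 0 <= ip (Pr pi u f) (Pr pi u f) by apply: ip_ge0.
have r2 : ip f h ^+ 2 <= s ^+ 2.
  rewrite r1; apply: le_trans cs _.
  have : ip (Pr pi u f) (Pr pi u f) <= s ^+ 2.
    rewrite pf; apply: le_trans R1 _; rewrite -ff.
    by rewrite ler_piMr ?sqr_ge0.
  move=> H; rewrite -[s ^+ 2]mulr1; apply: ler_pM => //.
nra.
Qed.


Lemma ip_comb0 k (w : 'I_k -> X -> R) g : ip (comb w 0) g = 0.
Proof. by rewrite ip_combL big1 // => i _; rewrite mxE mul0r. Qed.

Lemma memb s : singval T s -> s < 1 ->
  exists f h, (S1 `&` orth pi (S1 `&` S2)) f /\ (S2 `&` orth pi (S1 `&` S2)) h /\
   normpi pi f <= 1 /\ normpi pi h <= 1 /\ s = ip f h.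
Proof.
move=> [s0 [_ eig]] s1.
have [sz|spos] : s = 0 \/ 0 < s.
  by move: s0; rewrite le_eqVlt => /orP[/eqP<-|->]; [left|right].
  exists (comb e 0), (comb u 0); split; last split; last split; last split.
  - split; first by exists (comb e 0); rewrite (Pr_comb oe).
    by move=> g _; rewrite ip_comb0.
  - split; first by exists (comb u 0); rewrite (Pr_comb ou).
    by move=> g _; rewrite ip_comb0.
  - by rewrite /normpi ip_comb0 sqrtr0.
  - by rewrite /normpi ip_comb0 sqrtr0.
  - by rewrite ip_comb0.
have [a0 a0B a00] : exists2 a0 : 'rV_k1, a0 *m B1 = s ^+ 2 *: a0 & a0 != 0.
  exact/eigenvalueP.
have d0 := dot_gt0 a00.
set nrm := Num.sqrt (dot a0 a0).
have npos : 0 < nrm by rewrite sqrtr_gt0.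
have n2 : nrm ^+ 2 = dot a0 a0 by rewrite sqr_sqrtr // ltW.
set a := nrm^-1 *: a0.
have daa : dot a a = 1.
  rewrite dotZl dotZr -n2; field; exact: lt0r_neq0.
have aB : a *m B1 = s ^+ 2 *: a.
  by rewrite -scalemxAl a0B !scalerA mulrC.
set f := comb e a; set b := s^-1 *: (a *m T^T); set h := comb u b.
have qa : dot (a *m T^T) (a *m T^T) = s ^+ 2 by rewrite -Q aB dotZl daa mulr1.
have fS1 : S1 f by exists f; rewrite (Pr_comb oe).
have hS2 : S2 h by exists h; rewrite (Pr_comb ou).
have cuf : coef pi u f = a *m T^T by rewrite coef_cross.
have fo : forall g, (S1 `&` S2) g -> ip f g = 0.
  move=> g [g1 g2].
  have P1g : Pr pi e g = g by apply: (inS oe).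
  have P2g : Pr pi u g = g by apply: (inS ou).
  have E1 : ip (comb e (a *m B1)) g = ip f g.
    rewrite -{1}P1g ipPR (coef_comb oe) mulmxA dot_mulmx -coef_cross.
    rewrite -[comb e (coef pi e g)]/(Pr pi e g) P1g -cuf.
    by rewrite -ipPR P2g.
  have E2 : ip (comb e (a *m B1)) g = s ^+ 2 * ip f g by rewrite aB ip_combZ.
  have : (s ^+ 2 - 1) * ip f g = 0 by rewrite mulrBl mul1r -E2 E1 subrr.
  move/eqP; rewrite mulf_eq0 => /orP[|/eqP //].
  by rewrite subr_eq0 => /eqP H; exfalso; nra.
exists f, h; split; last split; last split; last split.
- by split => // g /fo.
- split => // g gS; have [g1 g2] := gS.
  have P2g : Pr pi u g = g by apply: (inS ou).
  rewrite /h -P2g ipPR (coef_comb ou) /b dotZl -cuf -ipPR P2g fo //.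
  by rewrite mulr0.
- by rewrite /normpi /f (ip_comb oe) daa sqrtr1.
- rewrite /normpi /h (ip_comb ou) /b dotZl dotZr qa.
  have -> : s^-1 * (s^-1 * s ^+ 2) = 1 by field; exact: lt0r_neq0.
  by rewrite sqrtr1.
- rewrite /h -(Pr_comb ou b) ipPR (coef_comb ou) cuf /b dotZr qa.
  by field; exact: lt0r_neq0.
Qed.

Lemma partA s : singval T s -> s < 1 ->
  (forall s', singval T s' -> s' < 1 -> s' <= s) ->
  cosine pi S1 S2 = s.
Proof.
move=> sv s1 smax; apply: sup_eq.
  by have [f [h H]] := memb sv s1; exists f, h.
move=> r [f [h [H1 [H2 [n1 [n2 ->]]]]]].
exact: (upper sv s1 smax H1 H2 n1 n2).
Qed.


Lemma quad_eq : ~~ eigenvalue B1 0 -> (forall s, singval T s -> s = 1) ->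
  forall a, dot (a *m B1) a = dot a a.
Proof.
move=> ne0 all1 a; apply/le_anti/andP; split.
  have := @ray _ _ B1 B1sym 1 _ 1%:M (submx1 _)
    (fun v lam _ v0 vB => (eig_range v0 vB).2) a (submx1 _).
  by rewrite mul1r.
have Nsym : (- B1)^T = - B1 by rewrite linearN /= B1sym.
have Hev : forall (v : 'rV_k1) (lam : R), (v <= 1%:M)%MS -> v != 0 ->
    v *m - B1 = lam *: v -> lam <= -1.
  move=> v lam _ v0 vB.
  have vB' : v *m B1 = (- lam) *: v by rewrite scaleNr -vB mulmxN opprK.
  have [l0 _] := eig_range v0 vB'.
  have lpos : 0 < - lam.
    rewrite lt_neqAle l0 andbT; apply/negP => /eqP l0'.
    move: ne0 => /negP; apply; apply/eigenvalueP; exists v => //; by rewrite vB' -l0'.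
  have := all1 _ (eig_singval v0 vB' lpos) => H.
  have := sqr_sqrtr (ltW lpos); rewrite H expr1n => E; lra.
have := @ray _ _ (- B1) Nsym (-1) _ 1%:M (submx1 _) Hev a (submx1 _).
rewrite mulmxN dotNl; lra.
Qed.

Lemma incl : ~~ eigenvalue B1 0 -> (forall s, singval T s -> s = 1) ->
  forall f, S1 f -> S2 f.
Proof.
move=> ne0 all1 f fS; exists f; apply/esym/(fixP pipos ou).
by rewrite (fS1 fS) ipP2 quad_eq // (ip_comb oe).
Qed.

Lemma concl : (forall f, S1 f -> S2 f) ->
  cosine pi S1 S2 = 0 /\
  forall Ginf, is_orth_proj pi (S1 `&` S2) Ginf ->
    (forall f, Pr pi e (Pr pi u f) = Ginf f) /\
    (forall f, Pr pi u (Pr pi e f) = Ginf f).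
Proof.
move=> sub; split.
  apply: sup_eq.
    exists (comb e 0), (comb u 0); split; last split; last split; last split.
    - split; first by exists (comb e 0); rewrite (Pr_comb oe).
      by move=> g _; rewrite ip_comb0.
    - split; first by exists (comb u 0); rewrite (Pr_comb ou).
      by move=> g _; rewrite ip_comb0.
    - by rewrite /normpi ip_comb0 sqrtr0.
    - by rewrite /normpi ip_comb0 sqrtr0.
    - by rewrite ip_comb0.
  move=> r [f [h [[f1 fo] [H2 [_ [_ ->]]]]]].
  have f0 : f = (fun _ => 0).
    by apply: (ip_eq0 pipos); apply: fo; split => //; exact: sub.
  by rewrite f0 ip0L.
move=> Ginf HG.
have Gfe : forall f, Ginf f = Pr pi e f.
  move=> f; have [[G1 G2] Go] := HG f.
  have orthS1 : forall g, S1 g -> ip (Ginf f) g = ip f g.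
    move=> g g1; have := Go g (conj g1 (sub g g1)); rewrite ipBL => /eqP.
    by rewrite subr_eq0 => /eqP.
  pose d := fun x => Ginf f x - Pr pi e f x.
  have dS : forall g, S1 g -> ip d g = 0.
    by move=> g g1; rewrite ipBL orthS1 // ipP_adj (inS oe g1) subrr.
  have : ip d d = 0.
    rewrite ipBR !dS ?subrr //; by exists f.
  move/(ip_eq0 pipos) => D; apply: funext => x.
  by have := congr1 (fun h => h x) D => /= /eqP; rewrite subr_eq0 => /eqP.
split => f; rewrite Gfe.
  apply: (ip_ext pipos) => g.
  rewrite (ipP_adj pi e (Pr pi u f) g) (ipP_adj pi u f (Pr pi e g)).
  rewrite (inS ou (sub _ (ex_intro _ g erefl))).
  by rewrite (ipP_adj pi e f g).
by apply: (inS ou); apply: sub; exists f.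
Qed.

End Abstract.

Lemma TTswap (R : realType) (X : finType) (pi : X -> R) k1 k2
  (e : 'I_k1 -> X -> R) (u : 'I_k2 -> X -> R) : TT pi u e = (TT pi e u)^T.
Proof. by apply/matrixP => i j; rewrite !mxE ipC. Qed.

Lemma singval_tr (R : realType) m n (T : 'M[R]_(m, n)) s :
  singval T^T s -> singval T s.
Proof. by rewrite /singval !trmxK => -[? [? ?]]. Qed.

Lemma cosineC (R : realType) (X : finType) (pi : X -> R) A B :
  cosine pi A B = cosine pi B A.
Proof.
rewrite /cosine [B `&` A]setIC; congr sup; apply/funext => r; apply/propext.
by split => -[f [h [H1 [H2 [n1 [n2 ->]]]]]]; exists h, f; rewrite ipC; exact: (conj H2 (conj H1 (conj n2 (conj n1 erefl)))).
Qed.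

Theorem abstract_main (R : realType) (X : finType) (pi : X -> R)
  (pipos : forall x, 0 < pi x) k1 k2
  (e : 'I_k1 -> X -> R) (u : 'I_k2 -> X -> R)
  (oe : forall i j, inner pi (e i) (e j) = (i == j)%:R)
  (ou : forall i j, inner pi (u i) (u j) = (i == j)%:R) :
  let S1 := [set f | exists g, f = Pr pi e g] in
  let S2 := [set f | exists g, f = Pr pi u g] in
  let T := TT pi e u in
  (forall s, singval T s -> s < 1 ->
     (forall s', singval T s' -> s' < 1 -> s' <= s) ->
     cosine pi S1 S2 = s) /\
  ((forall s, singval T s -> s = 1) ->
     cosine pi S1 S2 = 0 /\
     forall Ginf : (X -> R) -> (X -> R), is_orth_proj pi (S1 `&` S2) Ginf ->
       (forall f, Pr pi e (Pr pi u f) = Ginf f) /\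
       (forall f, Pr pi u (Pr pi e f) = Ginf f)).
Proof.
move=> S1 S2 T; split; first exact: partA.
move=> all1.
have [ne0|e0] := boolP (~~ eigenvalue ((TT pi e u)^T *m TT pi e u) 0).
  exact/concl/incl.
have ne0' : ~~ eigenvalue ((TT pi u e)^T *m TT pi u e) 0.
  rewrite TTswap trmxK; apply/negP => H.
  have : singval T 0.
    by split => //; rewrite expr0n /=; split => //; rewrite negbK in e0.
  by move/all1 => /eqP; rewrite eq_sym oner_eq0.
have all1' : forall s, singval (TT pi u e) s -> s = 1.
  by move=> s; rewrite TTswap => /singval_tr /all1.
have sub := incl pipos ou oe ne0' all1'.
have [c0 G] := concl pipos ou oe sub.
split; first by rewrite cosineC.
move=> Ginf HG.
have HG' : is_orth_proj pi (S2 `&` S1) Ginf by rewrite setIC.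
by have [A B] := G Ginf HG'; split.
Qed.

Section Conc.
Variables (R : realType) (X : finType) (pi : X -> R).
Hypothesis pipos : forall x, 0 < pi x.
Variables (gT : finGroupType) (to : {action gT &-> X}).

Definition Ob (i : 'I_#|orbits to|) : {set X} := @enum_val _ (mem (orbits to)) i.
Definition ef (i : 'I_#|orbits to|) : X -> R :=
  fun x => if x \in Ob i then (Num.sqrt (piA pi (Ob i)))^-1 else 0.

Lemma orbK x : x \in orb to x.
Proof. exact: orbit_refl. Qed.

Lemma orb_eq x y : x \in orb to y -> orb to x = orb to y.
Proof. by move/orbit_eqP. Qed.

Lemma Ob_orb i : exists y, Ob i = orb to y.
Proof.
have := enum_valP i; rewrite /orbits => /imsetP [y _ E].
by exists y; rewrite /Ob E.
Qed.

Lemma inOb x : exists i, Ob i = orb to x.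
Proof.
have H : orb to x \in orbits to by apply: imset_f.
by exists (enum_rank_in H (orb to x)); rewrite /Ob enum_rankK_in.
Qed.

Lemma Ob_x x i : x \in Ob i -> Ob i = orb to x.
Proof. by have [y ->] := Ob_orb i => /orb_eq ->. Qed.

Lemma Ob_uniq i j x : x \in Ob i -> x \in Ob j -> i = j.
Proof.
move=> /Ob_x xi /Ob_x xj; apply: enum_val_inj.
by rewrite -[enum_val i]/(Ob i) -[enum_val j]/(Ob j) xi xj.
Qed.

Lemma pOb_pos i : 0 < piA pi (Ob i).
Proof.
have [y E] := Ob_orb i; have yO : y \in Ob i by rewrite E orbK.
rewrite /piA (bigD1 y) //=; apply: lt_le_trans (pipos y) _.
by rewrite lerDl; apply: sumr_ge0 => z _; apply: ltW.
Qed.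

Lemma ortho_ef i j : inner pi (ef i) (ef j) = (i == j)%:R.
Proof.
rewrite /inner; case: (eqVneq i j) => [<-|ij].
  have p0 := pOb_pos i; set p := piA pi (Ob i).
  have sp : Num.sqrt p ^+ 2 = p by rewrite sqr_sqrtr // ltW.
  have s0 : Num.sqrt p != 0 by rewrite gt_eqF // sqrtr_gt0.
  rewrite (eq_bigr (fun x => if x \in Ob i then pi x * (Num.sqrt p)^-1 ^+ 2 else 0)).
    rewrite -big_mkcond -mulr_suml -[\sum_(x in Ob i) pi x]/p -{1}sp; by rewrite -exprMn mulfV ?expr1n.
  by move=> x _; rewrite /ef; case: ifP => _; rewrite ?mul0r // expr2; ring.
rewrite big1 // => x _; rewrite /ef; case: ifP => xi; case: ifP => xj;
  rewrite ?mulr0 ?mul0r //.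
by move: ij; rewrite (Ob_uniq xi xj) eqxx.
Qed.

Lemma kopE : kop (gibbs pi to) = Pr pi ef.
Proof.
apply: funext => f; apply: funext => x.
have [i0 Hi0] := inOb x.
rewrite /Pr /comb (bigD1 i0) //= big1 ?addr0 => [|i ii0]; last first.
  rewrite /ef; case: ifP => xi; last by rewrite mulr0.
  by move: ii0; rewrite (Ob_uniq xi (_ : x \in Ob i0)) ?eqxx // Hi0 orbK.
rewrite mxE /inner /ef /kop /gibbs Hi0 orbK.
set p := piA pi (orb to x).
have p0 : 0 < p by rewrite /p -Hi0 pOb_pos.
have sp : Num.sqrt p ^+ 2 = p by rewrite sqr_sqrtr // ltW.
have s0 : Num.sqrt p != 0 by rewrite gt_eqF // sqrtr_gt0.
rewrite mulr_suml; apply: eq_bigr => y _.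
case: ifP => _; last by rewrite !mulr0 !mul0r.
rewrite -{1}sp; field; exact: s0.
Qed.
End Conc.

Lemma TmatE (R : realType) (X : finType) (pi : X -> R)
  (pipos : forall x, 0 < pi x)
  (gT1 gT2 : finGroupType) (to1 : {action gT1 &-> X}) (to2 : {action gT2 &-> X}) :
  Tmat pi to1 to2 = TT pi (@ef _ _ pi _ to1) (@ef _ _ pi _ to2).
Proof.
apply/matrixP => j i; rewrite !mxE /=.
have p1 := pOb_pos pipos i; have p2 := pOb_pos pipos j.
rewrite -[enum_val i]/(Ob i) -[enum_val j]/(Ob j).
set O := Ob i; set C := Ob j.
rewrite sqrtrM ?ltW // invfM.
have s1 : Num.sqrt (piA pi O) != 0 by rewrite gt_eqF // sqrtr_gt0.
have s2 : Num.sqrt (piA pi C) != 0 by rewrite gt_eqF // sqrtr_gt0.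
rewrite /inner (eq_bigr (fun x => if x \in O :&: C then
   pi x * ((Num.sqrt (piA pi O))^-1 * (Num.sqrt (piA pi C))^-1) else 0)).
  by rewrite -big_mkcond -mulr_suml.
move=> x _; rewrite /ef -/O -/C finset.in_setI; case: ifP => _; case: ifP => _ /=;
  rewrite ?mulr0 ?mul0r //; ring.
Qed.

Unset Implicit Arguments.

Theorem proposition8p6 (R : realType) (X : finType) (pi : X -> R)
  (gT1 gT2 : finGroupType) (to1 : {action gT1 &-> X}) (to2 : {action gT2 &-> X}) :
  (forall x, 0 < pi x) -> \sum_x pi x = 1 ->
  let S1 := range_sp (gibbs pi to1) in
  let S2 := range_sp (gibbs pi to2) in
  let T := Tmat pi to1 to2 in
  (forall s, singval T s -> s < 1 ->
     (forall s', singval T s' -> s' < 1 -> s' <= s) ->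
     cosine pi S1 S2 = s) /\
  ((forall s, singval T s -> s = 1) ->
     cosine pi S1 S2 = 0 /\
     forall Ginf : (X -> R) -> (X -> R), is_orth_proj pi (S1 `&` S2) Ginf ->
       (forall f, kop (gibbs pi to1) (kop (gibbs pi to2) f) = Ginf f) /\
       (forall f, kop (gibbs pi to2) (kop (gibbs pi to1) f) = Ginf f)).
Proof.
move=> pipos _ S1 S2 T.
rewrite /S1 /S2 /T /range_sp !kopE. have TE := TmatE pipos to1 to2. setoid_rewrite TE.
exact (abstract_main pipos (@ortho_ef _ _ pi pipos _ to1) (@ortho_ef _ _ pi pipos _ to2)). all: exact: pipos.
Qed.
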